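(* Let $a<b$ be coprime positive integers with $\alpha=\sqrt{b/a}\notin\mathbb{Q}$. Let $\Gamma\subset\mathbb{Z}^2$ be a full-rank lattice with basis $\mathbf e_1=(\lambda_1,\mu_1)$, $\mathbf e_2=(\lambda_2,\mu_2)$ satisfying $\|\mathbf e_1\|\le2\nu_2$ and $\|\mathbf e_2\|\le2\nu_1$, and let $\theta=-\frac{\lambda_1-\alpha\mu_1}{\lambda_2-\alpha\mu_2}$. Then for all positive integers $u,v$, $$\Big|\frac uv-\alpha\Big|\ge\frac{\Xi(\alpha)}{v^2}\quad\text{and}\quad\Big|\frac uv-\theta\Big|\ge\frac{\xi(\theta)}{v^2},\qquad\text{where } \Xi(\alpha)=(4\sqrt{ab})^{-1},\ \xi(\theta)=(162\,b\det\Gamma)^{-1}.$$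
   Context: $\|(x,y)\|=\max(|x|,|y|)$, and $\nu_1\le\nu_2$ are the successive minima of $\Gamma$ with respect to this norm. *)

(* Defs.v *)
From Stdlib Require Import Reals ZArith Lra Lia.
Open Scope R_scope.

Definition vec := (Z * Z)%type.

Definition supnorm (v : vec) : Z := Z.max (Z.abs (fst v)) (Z.abs (snd v)).

Definition det2 (v w : vec) : Z := (fst v * snd w - snd v * fst w)%Z.

Definition in_lattice (e1 e2 v : vec) : Prop :=
  exists m n : Z, fst v = (m * fst e1 + n * fst e2)%Z /\
                  snd v = (m * snd e1 + n * snd e2)%Z.

Definition full_rank (e1 e2 : vec) : Prop := det2 e1 e2 <> 0%Z.

Definition lattice_det (e1 e2 : vec) : Z := Z.abs (det2 e1 e2).

Definition is_first_minimum (e1 e2 : vec) (nu : Z) : Prop :=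
  (exists v, in_lattice e1 e2 v /\ v <> (0%Z, 0%Z) /\ supnorm v <= nu)%Z /\
  (forall v, in_lattice e1 e2 v -> v <> (0%Z, 0%Z) -> nu <= supnorm v)%Z.

Definition is_second_minimum (e1 e2 : vec) (nu : Z) : Prop :=
  (exists v w, in_lattice e1 e2 v /\ in_lattice e1 e2 w /\ det2 v w <> 0 /\
     supnorm v <= nu /\ supnorm w <= nu)%Z /\
  (forall v w, in_lattice e1 e2 v -> in_lattice e1 e2 w -> det2 v w <> 0 ->
     nu <= Z.max (supnorm v) (supnorm w))%Z.

Definition irrational (x : R) : Prop :=
  ~ exists p q : Z, q <> 0%Z /\ x = IZR p / IZR q.

(* Main.v *)
Require Import Defs.
From Stdlib Require Import Reals ZArith Lra Lia.
Open Scope R_scope.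

Lemma red_ex (r p : Z) : p <> 0%Z -> exists k, (2 * Z.abs (r + k*p) <= Z.abs p)%Z.
Proof.
  intros Hp.
  assert (HP : (0 < Z.abs p)%Z) by lia.
  pose proof (Z.div_mod r (Z.abs p) ltac:(lia)) as Hd.
  pose proof (Z.mod_pos_bound r (Z.abs p) HP) as Hb.
  set (qq := (r / Z.abs p)%Z) in *. set (rr := (r mod Z.abs p)%Z) in *.
  destruct (Z_lt_le_dec 0 p) as [Hpos|Hneg].
  - rewrite Z.abs_eq in * by lia.
    destruct (Z_le_gt_dec (2*rr) p).
    + exists (-qq)%Z. replace (r + - qq * p)%Z with rr by lia. lia.
    + exists (-qq-1)%Z. replace (r + (- qq -1) * p)%Z with (rr - p)%Z by lia. lia.
  - rewrite Z.abs_neq in * by lia.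
    destruct (Z_le_gt_dec (2*rr) (-p)).
    + exists (qq)%Z. replace (r + qq * p)%Z with rr by lia. lia.
    + exists (qq+1)%Z. replace (r + (qq + 1) * p)%Z with (rr + p)%Z by lia. lia.
Qed.

Lemma core (p q r s d : Z) : (Z.abs q <= Z.abs p)%Z -> (2 * Z.abs r <= Z.abs p)%Z ->
  Z.abs (p*s - q*r) = d -> (Z.abs p <= Z.max (Z.abs r) (Z.abs s))%Z -> (0 < Z.abs p)%Z ->
  (Z.abs p <= Z.abs s)%Z /\ (Z.abs p * Z.abs s <= 2 * d)%Z.
Proof.
  intros H1 H2 H3 H4 H5.
  assert (Hs : (Z.abs p <= Z.abs s)%Z) by lia.
  split; auto.
  assert (T : (Z.abs (p*s) <= Z.abs (p*s - q*r) + Z.abs (q*r))%Z).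
  { replace (p*s)%Z with ((p*s - q*r) + q*r)%Z at 1 by ring. apply Z.abs_triangle. }
  rewrite !Z.abs_mul in T.
  assert (T2 : (2 * (Z.abs q * Z.abs r) <= Z.abs p * Z.abs p)%Z) by nia.
  assert (T3 : (Z.abs p * Z.abs p <= Z.abs p * Z.abs s)%Z) by nia.
  lia.
Qed.

Lemma supnorm_scale (c x y : Z) : (0 <= c)%Z ->
  Z.max (Z.abs (c*x)) (Z.abs (c*y)) = (c * Z.max (Z.abs x) (Z.abs y))%Z.
Proof.
  intros Hc. rewrite !Z.abs_mul, (Z.abs_eq c) by lia.
  apply Z.mul_max_distr_nonneg_l; lia.
Qed.

Lemma supnorm_pos (v : vec) : v <> (0%Z,0%Z) -> (1 <= supnorm v)%Z.
Proof.
  destruct v as [p q]; unfold supnorm; simpl; intros H.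
  destruct (Z.eq_dec p 0); destruct (Z.eq_dec q 0); subst; try congruence; lia.
Qed.

Lemma minima_bound e1 e2 nu1 nu2 : full_rank e1 e2 -> is_first_minimum e1 e2 nu1 ->
  is_second_minimum e1 e2 nu2 ->
  (1 <= nu1 /\ nu1 <= nu2 /\ nu1 * nu2 <= 2 * lattice_det e1 e2)%Z.
Proof.
  intros Hfr [[f [[m [n [Hf1 Hf2]]] [Hf0 Hfn]]] Hmin] [[v [w [Hv [Hw [Hvw [Hvn Hwn]]]]]] Hmin2].
  destruct e1 as [l1 u1]; destruct e2 as [l2 u2]; cbn [fst snd] in *.
  unfold full_rank, lattice_det, det2 in *; cbn [fst snd] in *.
  assert (Hfeq : supnorm f = nu1) by (specialize (Hmin f); apply Z.le_antisymm; auto;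
     apply Hmin; auto; exists m, n; auto).
  assert (Hnu1 : (1 <= nu1)%Z) by (rewrite <- Hfeq; apply supnorm_pos; auto).
  assert (Hle : (nu1 <= nu2)%Z).
  { assert (v <> (0%Z,0%Z)) by (intro; subst; unfold det2 in Hvw; simpl in Hvw; apply Hvw; ring).
    specialize (Hmin v Hv H). clear - Hmin Hvn. lia. }
  clear v w Hv Hw Hvw Hvn Hwn Hfn.
  destruct f as [p q]; cbn [fst snd] in *.
  assert (Hc : Z.gcd m n = 1%Z).
  { set (c := Z.gcd m n).
    assert (c <> 0%Z).
    { intro Hc0. apply Z.gcd_eq_0 in Hc0. destruct Hc0 as [-> ->]. apply Hf0.
      rewrite Hf1, Hf2. f_equal; ring. }
    assert (0 <= c)%Z by apply Z.gcd_nonneg.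
    destruct (Z.gcd_divide_l m n) as [m1 Hm1]. destruct (Z.gcd_divide_r m n) as [n1 Hn1].
    fold c in Hm1, Hn1.
    set (f' := ((m1*l1 + n1*l2)%Z, (m1*u1 + n1*u2)%Z)).
    assert (Hp : p = (c * fst f')%Z) by (simpl; rewrite Hf1, Hm1, Hn1; ring).
    assert (Hq : q = (c * snd f')%Z) by (simpl; rewrite Hf2, Hm1, Hn1; ring).
    assert (Hf'0 : f' <> (0%Z,0%Z)).
    { intro E. apply Hf0. rewrite Hp, Hq, E. simpl. f_equal; ring. }
    assert (Hl : in_lattice (l1,u1) (l2,u2) f') by (exists m1, n1; simpl; auto).
    specialize (Hmin f' Hl Hf'0).
    unfold supnorm in Hfeq, Hmin; simpl in Hfeq.
    rewrite Hp, Hq, supnorm_scale in Hfeq by assumption.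
    simpl in Hmin. set (M := Z.max _ _) in *. clearbody M.
    clear - Hfeq Hmin Hnu1 H H0.
    assert (c * M <= 1 * M)%Z by lia. assert (c <= 1)%Z by nia. lia. }
  destruct (Z.gcd_bezout m n 1 Hc) as [x [y Hxy]].
  set (g := ((-y*l1 + x*l2)%Z, (-y*u1 + x*u2)%Z)).
  destruct g as [r s] eqn:Hg.
  assert (Hdet : (p*s - q*r = l1*u2 - u1*l2)%Z).
  { unfold g in Hg. inversion Hg. rewrite Hf1, Hf2.
    transitivity ((m*x + n*y)*(l1*u2-u1*l2))%Z; [ring | replace (m*x+n*y)%Z with 1%Z by (clear - Hxy; lia); ring]. }
  assert (Hlat : forall k, in_lattice (l1,u1) (l2,u2) ((r + k*p)%Z, (s + k*q)%Z)).
  { intro k. exists (-y + k*m)%Z, (x + k*n)%Z. unfold g in Hg; inversion Hg; simpl.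
    rewrite Hf1, Hf2. split; ring. }
  assert (Hfl : in_lattice (l1,u1) (l2,u2) (p,q)) by (exists m, n; auto).
  unfold supnorm in Hfeq; cbn [fst snd] in Hfeq.
  set (D := (l1*u2 - u1*l2)%Z) in *.
  destruct (Z_le_gt_dec (Z.abs q) (Z.abs p)) as [Hqp|Hqp].
  - assert (p <> 0%Z) by (clear - Hfeq Hnu1 Hqp; lia).
    destruct (red_ex r p H) as [k Hk].
    set (r' := (r + k*p)%Z) in *. set (s' := (s + k*q)%Z) in *.
    assert (Hd' : (p*s' - q*r' = D)%Z) by (unfold r', s'; rewrite <- Hdet; ring).
    assert (Hne : ((r',s') <> (0%Z,0%Z))).
    { intro E; injection E as E1 E2. rewrite E1, E2 in Hd'. apply Hfr. rewrite <- Hd'. ring. }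
    pose proof (Hmin (r',s') (Hlat k) Hne) as Hm'.
    assert (Hnd : det2 (p,q) (r',s') <> 0%Z) by (unfold det2; simpl; rewrite Hd'; auto).
    pose proof (Hmin2 (p,q) (r',s') Hfl (Hlat k) Hnd) as Hm2.
    unfold supnorm in Hm', Hm2; cbn [fst snd] in Hm', Hm2.
    clearbody r' s' D. clear - Hm' Hm2 Hfeq Hnu1 Hle Hqp Hk Hd' Hfr.
    destruct (core p q r' s' (Z.abs D) Hqp Hk ltac:(rewrite Hd'; auto)
      ltac:(lia) ltac:(lia)) as [C1 C2].
    repeat split; try lia.
    assert (nu1 = Z.abs p) by lia. assert (nu2 <= Z.abs s')%Z by lia.
    rewrite H. apply Z.le_trans with (Z.abs p * Z.abs s')%Z; auto. apply Z.mul_le_mono_nonneg_l; lia.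
  - assert (q <> 0%Z) by (clear - Hqp; lia).
    destruct (red_ex s q H) as [k Hk].
    set (r' := (r + k*p)%Z) in *. set (s' := (s + k*q)%Z) in *.
    assert (Hd' : (q*r' - p*s' = -D)%Z) by (unfold r', s'; rewrite <- Hdet; ring).
    assert (Hne : ((r',s') <> (0%Z,0%Z))).
    { intro E; injection E as E1 E2. rewrite E1, E2 in Hd'. apply Hfr. replace D with (- - D)%Z by ring. rewrite <- Hd'. ring. }
    pose proof (Hmin (r',s') (Hlat k) Hne) as Hm'.
    assert (Hnd : det2 (p,q) (r',s') <> 0%Z).
    { unfold det2; simpl. intro E. apply Hfr. replace D with (- (q*r' - p*s'))%Z by (rewrite Hd'; ring). rewrite <- E. ring. }
    pose proof (Hmin2 (p,q) (r',s') Hfl (Hlat k) Hnd) as Hm2.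
    unfold supnorm in Hm', Hm2; cbn [fst snd] in Hm', Hm2.
    clearbody r' s' D. clear - Hm' Hm2 Hfeq Hnu1 Hle Hqp Hk Hd' Hfr.
    destruct (core q p s' r' (Z.abs D) ltac:(lia) Hk
      ltac:(rewrite Hd', Z.abs_opp; auto) ltac:(lia) ltac:(lia)) as [C1 C2].
    repeat split; try lia.
    assert (nu1 = Z.abs q) by lia. assert (nu2 <= Z.abs r')%Z by lia.
    rewrite H. apply Z.le_trans with (Z.abs q * Z.abs r')%Z; auto. apply Z.mul_le_mono_nonneg_l; lia.
Qed.

Lemma goal_helper c V d : 0 < c -> 0 < V -> 1 <= c*V*d -> /c/V <= d.
Proof.
  intros Hc HV H.
  assert (HcV : 0 < c*V) by (apply Rmult_lt_0_compat; auto).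
  unfold Rdiv. replace (/c * /V) with (/(c*V)) by (field; lra).
  apply Rle_trans with (/(c*V) * (c*V*d)).
  - rewrite <- (Rmult_1_r (/(c*V))) at 1. apply Rmult_le_compat_l; auto.
    left; apply Rinv_0_lt_compat; auto.
  - right. field. lra.
Qed.

Lemma IZR_abs_ge1 (N : Z) : N <> 0%Z -> 1 <= Rabs (IZR N).
Proof. intros H. rewrite <- abs_IZR. apply IZR_le. lia. Qed.

Section S.
Variables a b : Z.
Hypothesis Ha : (0 < a)%Z.
Hypothesis Hab : (a < b)%Z.
Hypothesis Hirr : irrational (sqrt (IZR b / IZR a)).
Let al := sqrt (IZR b / IZR a).

Lemma al_sq : al * al = IZR b / IZR a.
Proof. unfold al. apply sqrt_sqrt. apply Rlt_le. apply Rdiv_lt_0_compat; apply IZR_lt; lia. Qed.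

Lemma a_al_sq : IZR a * (al * al) = IZR b.
Proof. rewrite al_sq. field. apply not_0_IZR. lia. Qed.

Lemma al_gt1 : 1 < al.
Proof.
  pose proof a_al_sq. assert (0 <= al) by (unfold al; apply sqrt_pos).
  assert (IZR a < IZR b) by (apply IZR_lt; lia). assert (0 < IZR a) by (apply IZR_lt; lia).
  assert (1 < al * al).
  { apply (Rmult_lt_reg_l (IZR a)); auto. lra. }
  nra.
Qed.

Lemma L_irr (x y : Z) : (x,y) <> (0%Z,0%Z) ->
  1 <= IZR a * (Rabs (IZR x - al*IZR y) * Rabs (IZR x + al*IZR y)).
Proof.
  intros Hxy.
  assert (HN : (a*x*x - b*y*y)%Z <> 0%Z).
  { intro E.
    destruct (Z.eq_dec y 0) as [Hy|Hy].
    - subst. assert (x = 0%Z) by nia. subst; congruence.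
    - apply Hirr. exists (Z.abs x), (Z.abs y). split; [lia|].
      assert (Er : IZR a * (IZR x * IZR x) = IZR b * (IZR y * IZR y)).
      { rewrite <- !mult_IZR. apply IZR_eq. lia. }
      assert (Hy' : IZR y <> 0) by (apply not_0_IZR; auto).
      assert (Ha' : IZR a <> 0) by (apply not_0_IZR; lia).
      rewrite !abs_IZR.
      assert (Hnn : 0 <= Rabs (IZR x) / Rabs (IZR y)).
      { unfold Rdiv; apply Rmult_le_pos; [apply Rabs_pos| left; apply Rinv_0_lt_compat; apply Rabs_pos_lt; auto]. }
      rewrite <- (sqrt_square _ Hnn). f_equal.
      assert (Rabs (IZR x) * Rabs (IZR x) = IZR x * IZR x) by (rewrite <- Rabs_mult; apply Rabs_right; nra).
      assert (Rabs (IZR y) * Rabs (IZR y) = IZR y * IZR y) by (rewrite <- Rabs_mult; apply Rabs_right; nra).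
      assert (Rabs (IZR y) <> 0) by (apply Rabs_no_R0; auto).
      transitivity ((Rabs (IZR x) * Rabs (IZR x)) / (Rabs (IZR y) * Rabs (IZR y))); [| field; auto].
      rewrite H, H0. field_simplify_eq; auto. simpl. rewrite !Rmult_1_r. symmetry; exact Er. }
  pose proof (IZR_abs_ge1 _ HN) as H1.
  rewrite <- Rabs_mult.
  assert (0 < IZR a) by (apply IZR_lt; lia).
  rewrite <- (Rabs_right (IZR a)) by lra. rewrite <- Rabs_mult.
  replace (IZR a * ((IZR x - al * IZR y) * (IZR x + al * IZR y)))
    with (IZR (a*x*x - b*y*y)); auto.
  rewrite minus_IZR, !mult_IZR. rewrite <- a_al_sq. ring.
Qed.

Lemma sqrt_ab : sqrt (IZR a * IZR b) = IZR a * al.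
Proof.
  rewrite <- a_al_sq. assert (0 < IZR a) by (apply IZR_lt; lia). pose proof al_gt1.
  replace (IZR a * (IZR a * (al * al))) with ((IZR a * al) * (IZR a * al)) by ring.
  apply sqrt_square. nra.
Qed.

Lemma partA (u v : Z) : (0 < u)%Z -> (0 < v)%Z ->
  Rabs (IZR u / IZR v - al) >= / (4 * sqrt (IZR a * IZR b)) / (IZR v ^ 2).
Proof.
  intros Hu Hv. apply Rle_ge. rewrite sqrt_ab.
  pose proof al_gt1. assert (HA : 1 <= IZR a) by (apply IZR_le; lia).
  assert (HV : 1 <= IZR v) by (apply IZR_le; lia).
  set (d := Rabs (IZR u / IZR v - al)).
  pose proof (L_irr u v ltac:(intro E; inversion E; lia)) as H1.
  assert (E1 : Rabs (IZR u - al * IZR v) = IZR v * d).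
  { unfold d. rewrite <- (Rabs_right (IZR v)) at 2 by lra. rewrite <- Rabs_mult. f_equal. field. lra. }
  assert (E2 : Rabs (IZR u + al * IZR v) <= IZR v * (d + 2*al)).
  { replace (IZR u + al * IZR v) with (IZR v * ((IZR u / IZR v - al) + 2*al)) by (field; lra).
    rewrite Rabs_mult, Rabs_right by lra. apply Rmult_le_compat_l; [lra|].
    eapply Rle_trans; [apply Rabs_triang|]. rewrite (Rabs_right (2*al)) by lra. unfold d; lra. }
  assert (Hd0 : 0 <= d) by apply Rabs_pos.
  apply goal_helper; [nra| nra|].
  destruct (Rle_lt_dec al d).
  - assert (1 <= IZR v ^ 2) by nra.
    assert (1 <= IZR a * al) by nra.
    assert (1 <= (IZR a * al) * IZR v ^ 2) by nra.
    assert (1 <= (IZR a * al) * IZR v ^ 2 * d) by nra. nra.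
  - rewrite E1 in H1.
    assert (H2 : 1 <= IZR a * (IZR v * d * (IZR v * (d + 2*al)))).
    { eapply Rle_trans; [apply H1|]. apply Rmult_le_compat_l; [lra|].
      apply Rmult_le_compat_l; [nra|auto]. }
    assert (H3 : IZR v * d * (IZR v * (d + 2 * al)) <= IZR v ^ 2 * d * (3*al)).
    { replace (IZR v * d * (IZR v * (d + 2 * al))) with (IZR v ^ 2 * d * (d + 2*al)) by ring.
      apply Rmult_le_compat_l; [|lra]. apply Rmult_le_pos; nra. }
    assert (H4 : IZR a * (IZR v * d * (IZR v * (d + 2 * al))) <= IZR a * (IZR v ^ 2 * d * (3*al))).
    { apply Rmult_le_compat_l; lra. }
    assert (0 <= IZR a * al * IZR v ^ 2 * d).
    { repeat apply Rmult_le_pos; nra. }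
    nra.
Qed.

Lemma abs_bound (l m : Z) (N : R) : Rabs (IZR l) <= N -> Rabs (IZR m) <= N ->
  Rabs (IZR l - al * IZR m) <= (1+al)*N /\ Rabs (IZR l + al * IZR m) <= (1+al)*N.
Proof.
  intros H1 H2. pose proof al_gt1.
  assert (Rabs (al * IZR m) <= al * N).
  { rewrite Rabs_mult, Rabs_right by lra. apply Rmult_le_compat_l; lra. }
  split.
  - unfold Rminus. eapply Rle_trans; [apply Rabs_triang|]. rewrite Rabs_Ropp. lra.
  - eapply Rle_trans; [apply Rabs_triang|]. lra.
Qed.

Lemma comp_le (l m : Z) : Rabs (IZR l) <= IZR (supnorm (l,m)) /\ Rabs (IZR m) <= IZR (supnorm (l,m)).
Proof. unfold supnorm; cbn [fst snd]. rewrite <- !abs_IZR. split; apply IZR_le; lia. Qed.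

Lemma partB (e1 e2 : vec) (nu1 nu2 : Z) :
  full_rank e1 e2 ->
  is_first_minimum e1 e2 nu1 -> is_second_minimum e1 e2 nu2 ->
  (supnorm e1 <= 2 * nu2)%Z -> (supnorm e2 <= 2 * nu1)%Z ->
  forall u v : Z, (0 < u)%Z -> (0 < v)%Z ->
    Rabs (IZR u / IZR v - - ((IZR (fst e1) - al * IZR (snd e1)) /
                  (IZR (fst e2) - al * IZR (snd e2)))) >=
      / (162 * IZR b * IZR (lattice_det e1 e2)) / (IZR v ^ 2).
Proof.
  intros Hfr Hm1 Hm2 HN1 HN2 u v Hu Hv.
  destruct (minima_bound e1 e2 nu1 nu2 Hfr Hm1 Hm2) as [Hn1 [Hle Hprod]].
  destruct e1 as [l1 m1]; destruct e2 as [l2 m2]; cbn [fst snd].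
  unfold full_rank, lattice_det, det2 in *; cbn [fst snd] in *.
  set (D := (l1*m2 - m1*l2)%Z) in *.
  set (N1 := supnorm (l1,m1)) in *. set (N2 := supnorm (l2,m2)) in *.
  assert (0 <= N1)%Z by (unfold N1, supnorm; lia).
  assert (0 <= N2)%Z by (unfold N2, supnorm; lia).
  assert (ZN1 : (N1 * N2 <= 8 * Z.abs D)%Z).
  { assert (N1*N2 <= (2*nu2)*(2*nu1))%Z by (apply Z.mul_le_mono_nonneg; lia).
    assert ((2*nu2)*(2*nu1) = 4*(nu1*nu2))%Z by ring. lia. }
  assert (ZN2 : (N2 * N2 <= 8 * Z.abs D)%Z).
  { assert (N2*N2 <= (2*nu1)*(2*nu1))%Z by (apply Z.mul_le_mono_nonneg; lia).
    assert (nu1*nu1 <= nu1*nu2)%Z by (apply Z.mul_le_mono_nonneg_l; lia).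
    assert ((2*nu1)*(2*nu1) = 4*(nu1*nu1))%Z by ring. lia. }
  assert (ZD : (1 <= Z.abs D)%Z) by lia.
  assert (RN1 : IZR N1 * IZR N2 <= 8 * IZR (Z.abs D)) by (rewrite <- !mult_IZR; apply IZR_le; lia).
  assert (RN2 : IZR N2 * IZR N2 <= 8 * IZR (Z.abs D)) by (rewrite <- !mult_IZR; apply IZR_le; lia).
  assert (RD : 1 <= IZR (Z.abs D)) by (apply IZR_le; lia).
  assert (N1pos : 0 <= IZR N1) by (apply IZR_le; unfold N1, supnorm; lia).
  assert (N2pos : 0 <= IZR N2) by (apply IZR_le; unfold N2, supnorm; lia).
  set (dd := IZR (Z.abs D)) in *.
  destruct (comp_le l1 m1) as [C1 C2]. destruct (comp_le l2 m2) as [C3 C4].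
  fold N1 in C1, C2. fold N2 in C3, C4.
  destruct (abs_bound l1 m1 _ C1 C2) as [BL1 BP1].
  destruct (abs_bound l2 m2 _ C3 C4) as [BL2 BP2].
  set (L1 := IZR l1 - al * IZR m1) in *. set (P1 := IZR l1 + al * IZR m1) in *.
  set (L2 := IZR l2 - al * IZR m2) in *. set (P2 := IZR l2 + al * IZR m2) in *.
  pose proof al_gt1 as Hal.
  assert (HA : 1 <= IZR a) by (apply IZR_le; lia).
  assert (HB : 1 <= IZR b) by (apply IZR_le; lia).
  assert (HV : 1 <= IZR v) by (apply IZR_le; lia).
  assert (HU : 0 < IZR u) by (apply IZR_lt; lia).
  assert (HL2 : L2 <> 0).
  { assert (Hne : (l2,m2) <> (0%Z,0%Z)) by (intro E; injection E as -> ->; apply Hfr; unfold D; ring).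
    pose proof (L_irr l2 m2 Hne) as HH. fold L2 P2 in HH. intro E. rewrite E, Rabs_R0 in HH. lra. }
  set (th := - (L1 / L2)).
  set (x := (u*l2 + v*l1)%Z). set (y := (u*m2 + v*m1)%Z).
  assert (Hxy : (x,y) <> (0%Z,0%Z)).
  { intro E. injection E as Ex Ey.
    assert (Hk : (u * D = y*l1 - x*m1)%Z) by (unfold x, y, D; ring).
    rewrite Ex, Ey in Hk. assert (HH : (u * D = 0)%Z) by lia. apply Z.mul_eq_0 in HH. lia. }
  pose proof (L_irr x y Hxy) as H1.
  set (dl := Rabs (IZR u / IZR v - th)).
  assert (Hdl : 0 <= dl) by apply Rabs_pos.
  assert (E1 : Rabs (IZR x - al * IZR y) = Rabs L2 * IZR v * dl).
  { rewrite <- (Rabs_right (IZR v)) by lra. unfold dl. rewrite <- !Rabs_mult. f_equal.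
    unfold x, y, th. rewrite !plus_IZR, !mult_IZR. unfold L1, L2. field.
    split; [exact HL2|lra]. }
  assert (Eth : Rabs th * Rabs L2 = Rabs L1).
  { rewrite <- Rabs_mult. replace (th * L2) with (- L1) by (unfold th; field; exact HL2). apply Rabs_Ropp. }
  assert (Euv : IZR u <= IZR v * (Rabs th + dl)).
  { replace (IZR u) with (IZR v * (th + (IZR u / IZR v - th))) at 1 by (field; lra).
    apply Rmult_le_compat_l; [lra|]. unfold dl.
    pose proof (Rle_abs th). pose proof (Rle_abs (IZR u / IZR v - th)). lra. }
  assert (E2 : Rabs (IZR x + al * IZR y) <= IZR u * Rabs P2 + IZR v * Rabs P1).
  { replace (IZR x + al * IZR y) with (IZR u * P2 + IZR v * P1)
      by (unfold x, y, P1, P2; rewrite !plus_IZR, !mult_IZR; ring).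
    eapply Rle_trans; [apply Rabs_triang|]. rewrite !Rabs_mult, (Rabs_right (IZR u)), (Rabs_right (IZR v)) by lra. lra. }
  apply Rle_ge. apply goal_helper; [nra|nra|].
  destruct (Rle_lt_dec 1 dl).
  - assert (1 <= IZR b * dd) by nra.
    assert (1 <= IZR v ^ 2) by nra.
    assert (1 <= IZR b * dd * IZR v ^ 2) by nra.
    assert (1 <= IZR b * dd * IZR v ^ 2 * dl) by nra.
    nra.
  - set (K := Rabs L1 * Rabs P2 + Rabs L2 * Rabs P2 + Rabs L2 * Rabs P1).
    assert (E3 : Rabs (IZR x + al * IZR y) <= IZR v * ((Rabs th + 1) * Rabs P2 + Rabs P1)).
    { eapply Rle_trans; [apply E2|].
      assert (IZR u * Rabs P2 <= IZR v * (Rabs th + 1) * Rabs P2).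
      { apply Rmult_le_compat_r; [apply Rabs_pos|]. nra. }
      nra. }
    assert (E4 : 1 <= IZR a * (IZR v ^ 2 * dl * K)).
    { eapply Rle_trans; [apply H1|]. apply Rmult_le_compat_l; [lra|].
      rewrite E1.
      replace (IZR v ^ 2 * dl * K) with (Rabs L2 * IZR v * dl * (IZR v * ((Rabs th + 1) * Rabs P2 + Rabs P1))).
      2:{ unfold K. rewrite <- Eth. ring. }
      apply Rmult_le_compat_l; [|exact E3].
      pose proof (Rabs_pos L2). repeat apply Rmult_le_pos; lra. }
    set (s := 1 + al).
    assert (Hs : IZR a * (s * s) <= 4 * IZR b).
    { rewrite <- a_al_sq. unfold s. assert (0 < IZR a) by lra.
      assert ((1+al)*(1+al) <= 4*(al*al)) by nra.
      replace (4 * (IZR a * (al * al))) with (IZR a * (4*(al*al))) by ring.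
      apply Rmult_le_compat_l; lra. }
    assert (HK : K <= s * s * (2 * (IZR N1 * IZR N2) + IZR N2 * IZR N2)).
    { unfold K. pose proof (Rabs_pos L1). pose proof (Rabs_pos L2).
      pose proof (Rabs_pos P1). pose proof (Rabs_pos P2).
      assert (Rabs L1 * Rabs P2 <= (s * IZR N1) * (s * IZR N2)) by (apply Rmult_le_compat; auto).
      assert (Rabs L2 * Rabs P2 <= (s * IZR N2) * (s * IZR N2)) by (apply Rmult_le_compat; auto).
      assert (Rabs L2 * Rabs P1 <= (s * IZR N2) * (s * IZR N1)) by (apply Rmult_le_compat; auto).
      nra. }
    assert (HK2 : IZR a * K <= 96 * IZR b * dd).
    { assert (0 <= s*s) by nra.
      assert (IZR a * K <= IZR a * (s * s) * (24 * dd)).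
      { assert (s * s * (2 * (IZR N1 * IZR N2) + IZR N2 * IZR N2) <= s * s * (24 * dd))
          by (apply Rmult_le_compat_l; lra).
        nra. }
      assert (IZR a * (s * s) * (24 * dd) <= 4 * IZR b * (24 * dd)) by (apply Rmult_le_compat_r; lra).
      lra. }
    assert (0 <= IZR v ^ 2 * dl) by nra.
    assert (IZR a * (IZR v ^ 2 * dl * K) = IZR v ^ 2 * dl * (IZR a * K)) by ring.
    assert (IZR v ^ 2 * dl * (IZR a * K) <= IZR v ^ 2 * dl * (96 * IZR b * dd))
      by (apply Rmult_le_compat_l; lra).
    assert (0 <= IZR v ^ 2 * dl * (IZR b * dd)) by (apply Rmult_le_pos; nra).
    nra.
Qed.
End S.

Theorem mainTheorem14 (a b : Z) (e1 e2 : vec) (nu1 nu2 : Z) :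
  (0 < a)%Z -> (a < b)%Z -> Z.gcd a b = 1%Z ->
  irrational (sqrt (IZR b / IZR a)) ->
  full_rank e1 e2 ->
  is_first_minimum e1 e2 nu1 -> is_second_minimum e1 e2 nu2 ->
  (supnorm e1 <= 2 * nu2)%Z -> (supnorm e2 <= 2 * nu1)%Z ->
  let alpha := sqrt (IZR b / IZR a) in
  let theta := - ((IZR (fst e1) - alpha * IZR (snd e1)) /
                  (IZR (fst e2) - alpha * IZR (snd e2))) in
  forall u v : Z, (0 < u)%Z -> (0 < v)%Z ->
    Rabs (IZR u / IZR v - alpha) >= / (4 * sqrt (IZR a * IZR b)) / (IZR v ^ 2) /\
    Rabs (IZR u / IZR v - theta) >=
      / (162 * IZR b * IZR (lattice_det e1 e2)) / (IZR v ^ 2).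
Proof.
  intros Ha Hab Hg Hirr Hfr Hm1 Hm2 HN1 HN2 alpha theta u v Hu Hv.
  unfold theta, alpha. split.
  - apply partA; auto.
  - apply (partB a b Ha Hab Hirr e1 e2 nu1 nu2); auto.
Qed.
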